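(* For every coherent distribution of $(X,Y)$ on $[0,1]^2$ with $EX=EY=p$, $$E|X-Y|\le 2p(1-p)\le\tfrac12,$$ with equality in the first inequality if $X=p$ and $Y$ has the Bernoulli$(p)$ distribution ($P(Y=1)=p$, $P(Y=0)=1-p$).
   Context: A distribution of $(X,Y)$ on $[0,1]^2$ is coherent if there exist, on some probability space, random variables with that joint distribution and an event $A$ such that $X=P(A\mid X)$ and $Y=P(A\mid Y)$. *)

(* Defs.v *)
From HB Require Import structures.
From mathcomp Require Import all_boot all_order all_algebra.
From mathcomp Require Import all_classical all_reals all_analysis.
Set Implicit Arguments. Unset Strict Implicit. Unset Printing Implicit Defensive.
Import Order.TTheory GRing.Theory Num.Theory.
Local Open Scope classical_set_scope.
Local Open Scope ring_scope.

(* [is_cond_prob P A X] : X is (a version of) the conditional probability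
   P(A | X) = E[1_A | sigma(X)]. *)
Definition is_cond_prob {d : measure_display} {T : measurableType d}
  {R : realType} (P : probability T R) (A : set T) (X : T -> R) : Prop :=
  measurable_fun setT X /\
  forall B : set R, measurable B ->
    P (A `&` X @^-1` B) = (\int[P]_(t in X @^-1` B) (X t)%:E)%E.

(* The pair (X, Y), with values in [0,1]^2, on the probability space (T, P),
   witnesses coherence via the event A: X = P(A|X) and Y = P(A|Y). *)
Definition coherent_pair {d : measure_display} {T : measurableType d}
  {R : realType} (P : probability T R) (A : set T) (X Y : T -> R) : Prop :=
  measurable A /\
  (forall t, 0 <= X t <= 1) /\ (forall t, 0 <= Y t <= 1) /\
  is_cond_prob P A X /\ is_cond_prob P A Y.

(* Main.v *)
Require Import Defs.
From HB Require Import structures.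
From mathcomp Require Import all_boot all_order all_algebra.
From mathcomp Require Import all_classical all_reals all_analysis.
From mathcomp Require Import measurable_realfun.
From mathcomp Require Import lra ring.
Import Order.TTheory GRing.Theory Num.Theory.
Local Open Scope classical_set_scope.
Local Open Scope ring_scope.
Import HBNNSimple.

Lemma cond_int_nnsfun (R : realType) (d : measure_display) (T : measurableType d)
  (P : probability T R) (A : set T) (X : T -> R)
  (mA : measurable A) (mX : measurable_fun setT X)
  (hX : forall B, measurable B -> P (A `&` X @^-1` B) = (\int[P]_(t in X @^-1` B) (X t)%:E)%E)
  (X0 : forall t, 0 <= X t) (s : {nnsfun R >-> R}) :
  (\int[P]_(t in A) (s (X t))%:E = \int[P]_t (X t * s (X t))%:E)%E.
Proof.
have mXs r : measurable (X @^-1` (s @^-1` [set r])).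
  rewrite -(setTI (X @^-1` _)); apply: mX => //; exact: measurable_funPTI.
have mEs r : measurable_fun setT (\1_(X @^-1` (s @^-1` [set r])) : T -> R).
  exact: measurable_indic.
transitivity (\sum_(r \in range s)
    \int[P]_(t in A) (r * \1_(X @^-1` (s @^-1` [set r])) t)%:E)%E.
  under eq_integral do rewrite fimfunE -fsumEFin//.
  rewrite ge0_integral_fsum//.
  - by move=> r; apply/measurable_EFinP/measurable_funM => //; exact: measurable_funTS (mEs r).
  - by move=> r t _; have := nnfun_muleindic_ge0 s r (X t); rewrite -EFinM.
transitivity (\sum_(r \in range s)
    \int[P]_t (r * (X t * \1_(X @^-1` (s @^-1` [set r])) t))%:E)%E; last first.
  rewrite -ge0_integral_fsum//.
  - apply: eq_integral => t _; rewrite fsumEFin//; congr (_%:E).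
    by rewrite [in RHS]fimfunE mulr_fsumr; apply: eq_fsbigr => r _; rewrite mulrCA.
  - move=> r; apply/measurable_EFinP/measurable_funM => //.
    exact: measurable_funM.
  - move=> r t _; have := nnfun_muleindic_ge0 s r (X t); rewrite -EFinM !lee_fin => h.
    by rewrite mulrCA mulr_ge0.
apply: eq_fsbigr => r rs.
have r0 : 0 <= r.
  by move: rs; rewrite inE => -[x _ <-].
rewrite (eq_integral (fun t => (r%:E * (\1_(X @^-1` (s @^-1` [set r])) t)%:E)%E)); last first.
  by move=> t _; rewrite EFinM.
rewrite ge0_integralZl//; last first.
  all: try (by move=> t _; rewrite lee_fin indicE); try (by rewrite lee_fin).
  all: try (by apply/measurable_EFinP; exact: measurable_funTS (mEs r)).
rewrite integral_indic//.
transitivity (r%:E * \int[P]_(t in X @^-1` (s @^-1` [set r])) (X t)%:E)%E.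
  congr (_ * _)%E; rewrite setIC; apply: hX; exact: measurable_funPTI.
rewrite [RHS](eq_integral (fun t => (r%:E * (X t * \1_(X @^-1` (s @^-1` [set r])) t)%:E)%E)); last first.
  by move=> t _; rewrite -EFinM.
rewrite ge0_integralZl//; last first.
  all: try (by move=> t _; rewrite lee_fin mulr_ge0// indicE); try (by rewrite lee_fin).
  all: try (by apply/measurable_EFinP/measurable_funM).
congr (_ * _)%E.
rewrite [LHS]integral_mkcond.
by apply: eq_integral => t _; rewrite epatch_indic /= EFinM.
Qed.

Lemma cond_int (R : realType) (d : measure_display) (T : measurableType d)
  (P : probability T R) (A : set T) (X : T -> R)
  (mA : measurable A) (mX : measurable_fun setT X)
  (hX : forall B, measurable B -> P (A `&` X @^-1` B) = (\int[P]_(t in X @^-1` B) (X t)%:E)%E)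
  (X0 : forall t, 0 <= X t) (g : R -> R) (mg : measurable_fun setT g)
  (g0 : forall x, 0 <= g x) :
  (\int[P]_(t in A) (g (X t))%:E = \int[P]_t (X t * g (X t))%:E)%E.
Proof.
have mgE : measurable_fun setT (EFin \o g) by apply/measurable_EFinP.
pose g_ := nnsfun_approx measurableT mgE.
have g_cvg x : (fun n => (g_ n x)%:E) @ \oo --> (g x)%:E.
  by apply: cvg_nnsfun_approx => // y _; rewrite lee_fin.
have g_nd x m n : (m <= n)%N -> g_ m x <= g_ n x.
  by move=> mn; exact/lefP/nd_nnsfun_approx.
transitivity (limn (fun n => \int[P]_(t in A) (g_ n (X t))%:E))%E.
  rewrite -monotone_convergence//.
  - apply: eq_integral => t _; apply/esym/cvg_lim => //; exact: g_cvg.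
  - move=> n; apply/measurable_EFinP; apply: measurableT_comp => //.
    exact: measurable_funTS mX.
  - by move=> n t _; rewrite lee_fin.
  - by move=> t _ m n mn; rewrite lee_fin; exact: g_nd.
transitivity (limn (fun n => \int[P]_t (X t * g_ n (X t))%:E))%E; last first.
  rewrite -monotone_convergence//.
  - apply: eq_integral => t _; apply/cvg_lim => //.
    under eq_fun do rewrite EFinM.
    rewrite EFinM; apply: cvgeZl => //; exact: g_cvg.
  - move=> n; apply/measurable_EFinP; apply: measurable_funM => //.
    apply: measurableT_comp => //.
  - by move=> n t _; rewrite lee_fin mulr_ge0.
  - by move=> t _ m n mn; rewrite lee_fin ler_wpM2l// g_nd.
congr (limn _); apply/funext => n.
exact: cond_int_nnsfun.
Qed.

Lemma ubound (R : realFieldType) (p x kx : R) : 0 <= x <= 1 -> 0 <= kx ->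
  (x < p^+2 /\ kx = 2 \/ p^+2 <= x /\ x * kx = 2 * p^+2) ->
  0 <= 2 * p^+2 + 2 * x - 4 * p + kx - x * kx.
Proof.
move=> /andP[x0 x1] kx0 [[h1 ->]|[h1 h2]]; first by have := sqr_ge0 (p - 1); rewrite !expr2; nra.
rewrite h2.
have [xe|xpos] := eqVneq x 0.
  rewrite xe in h1 h2 *.
  have p0 : p^+2 = 0 by apply/eqP; rewrite eq_le h1 sqr_ge0.
  have -> : p = 0 by move/eqP: p0; rewrite sqrf_eq0 => /eqP.
  by rewrite !expr2; lra.
have xp : 0 < x by rewrite lt_def xpos x0.
have : 0 <= x * (2 * x - 4 * p + kx).
  have -> : x * (2 * x - 4 * p + kx) = 2 * (x - p)^+2 by rewrite !expr2; nra.
  by rewrite mulr_ge0 // sqr_ge0.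
rewrite pmulr_rge0 // => h.
lra.
Qed.

Lemma ptwise (R : realFieldType) (p x y a kx ky : R) : 0 <= x <= 1 -> 0 <= y <= 1 ->
  (a = 0 \/ a = 1) -> 0 <= kx -> 0 <= ky ->
  (x < p^+2 /\ kx = 2 \/ p^+2 <= x /\ x * kx = 2 * p^+2) ->
  (y < p^+2 /\ ky = 2 \/ p^+2 <= y /\ y * ky = 2 * p^+2) ->
  `|x - y| <= 2 * p^+2 + (x - 2 * p * a) + (y - 2 * p * a) + (a - x) * kx + (a - y) * ky.
Proof.
move=> hx01 hy01 ha kx0 ky0 hx hy.
have Ux := @ubound _ p x kx hx01 kx0 hx.
have Uy := @ubound _ p y ky hy01 ky0 hy.
move: hx01 hy01 => /andP[x0 x1] /andP[y0 y1].
have Vx : 0 <= (1 - x) * kx by rewrite mulr_ge0 // subr_ge0.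
have Vy : 0 <= (1 - y) * ky by rewrite mulr_ge0 // subr_ge0.
rewrite ler_norml; apply/andP; split.
all: case: ha => ->; case: hx => [[hx1 hx2]|[hx1 hx2]]; case: hy => [[hy1 hy2]|[hy1 hy2]].
all: move: Ux Uy Vx Vy; rewrite ?hx2 ?hy2 => Ux Uy Vx Vy.
all: rewrite ?mulrBl ?mulrBr ?mul1r ?mul0r ?mulr1 ?mulr0 ?sub0r ?subr0 in Vx Vy Ux Uy *.
all: try rewrite hx2; try rewrite hy2.
all: lra.
Qed.

Lemma bint (R : realType) (d : measure_display) (T : measurableType d)
  (P : probability T R) (f : T -> R) (M : R) :
  measurable_fun setT f -> (forall t, `|f t| <= M) -> P.-integrable setT (EFin \o f).
Proof.
move=> mf hM; apply: measurable_bounded_integrable => //.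
  exact: (le_lt_trans (probability_le1 _ measurableT) (ltry _)).
rewrite /bounded_near; near=> N => t _ /=.
apply: le_trans (hM t) _; near: N; exact: nbhs_pinfty_ge (num_real M).
Unshelve. all: end_near. Qed.

Lemma intDi (R : realType) (d : measure_display) (T : measurableType d)
  (P : probability T R) (f g : T -> R) :
  P.-integrable setT (EFin \o f) -> P.-integrable setT (EFin \o g) ->
  P.-integrable setT (EFin \o (fun t => f t + g t)).
Proof.
move=> hf hg; apply: (eq_integrable measurableT ((EFin \o f) \+ (EFin \o g))%E).
  by move=> t _ /=; rewrite EFinD.
by apply: integrableD.
Qed.

Lemma intD (R : realType) (d : measure_display) (T : measurableType d)
  (P : probability T R) (f g : T -> R) :
  P.-integrable setT (EFin \o f) -> P.-integrable setT (EFin \o g) ->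
  (\int[P]_t (f t + g t)%:E = \int[P]_t (f t)%:E + \int[P]_t (g t)%:E)%E.
Proof.
move=> hf hg.
transitivity (\int[P]_t ((EFin \o f) t + (EFin \o g) t))%E.
  by apply: eq_integral => t _; rewrite EFinD.
exact: integralD.
Qed.

Lemma intZ (R : realType) (d : measure_display) (T : measurableType d)
  (P : probability T R) (c : R) (f : T -> R) :
  P.-integrable setT (EFin \o f) ->
  (\int[P]_t (c * f t)%:E = c%:E * \int[P]_t (f t)%:E)%E.
Proof.
move=> hf; rewrite -integralZl//; apply: eq_integral => t _; by rewrite EFinM.
Qed.

Lemma intcst (R : realType) (d : measure_display) (T : measurableType d)
  (P : probability T R) (c : R) :
  (\int[P]_t c%:E = c%:E)%E.
Proof.
rewrite integral_cst//; transitivity (c%:E * 1)%E; last exact: mule1.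
by congr (_ * _)%E; exact: probability_setT.
Qed.


Arguments intD {R d T P f g}.
Arguments intDi {R d T P f g}.

Lemma intD5 (R : realType) (d : measure_display) (T : measurableType d)
  (P : probability T R) (f1 f2 f3 f4 f5 : T -> R) :
  P.-integrable setT (EFin \o f1) -> P.-integrable setT (EFin \o f2) ->
  P.-integrable setT (EFin \o f3) -> P.-integrable setT (EFin \o f4) ->
  P.-integrable setT (EFin \o f5) ->
  (\int[P]_t (f1 t + f2 t + f3 t + f4 t + f5 t)%:E =
   \int[P]_t (f1 t)%:E + \int[P]_t (f2 t)%:E + \int[P]_t (f3 t)%:E +
   \int[P]_t (f4 t)%:E + \int[P]_t (f5 t)%:E)%E.
Proof.
move=> h1 h2 h3 h4 h5.
rewrite (intD (intDi (intDi (intDi h1 h2) h3) h4) h5).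
rewrite (intD (intDi (intDi h1 h2) h3) h4).
rewrite (intD (intDi h1 h2) h3).
by rewrite (intD h1 h2).
Qed.

Theorem corollary2p5 (R : realType) (d : measure_display) (T : measurableType d)
  (P : probability T R) (A : set T) (X Y : T -> R) (p : R) :
  coherent_pair P A X Y ->
  (\int[P]_t (X t)%:E = p%:E)%E ->
  (\int[P]_t (Y t)%:E = p%:E)%E ->
  [/\ (\int[P]_t (`|X t - Y t|)%:E <= (2 * p * (1 - p))%:E)%E,
      2 * p * (1 - p) <= 1 / 2 &
      ({ae P, forall t, X t = p} ->
       P (Y @^-1` [set 1]) = p%:E ->
       P (Y @^-1` [set 0]) = (1 - p)%:E ->
       (\int[P]_t (`|X t - Y t|)%:E = (2 * p * (1 - p))%:E)%E)].
Proof.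
move=> [mA [hX01 [hY01 [[mX hX] [mY hY]]]]] EX EY.
have PA : P A = p%:E.
  have h := hX setT measurableT.
  rewrite preimage_setT setIT in h.
  by rewrite h.
have p0 : 0 <= p by rewrite -lee_fin -PA; exact: measure_ge0.
have p1 : p <= 1 by rewrite -lee_fin -PA; exact: probability_le1.
have part2 : 2 * p * (1 - p) <= 1 / 2.
  by have := sqr_ge0 (p - 1/2); rewrite expr2; nra.
pose k := fun x : R => 2 * p^+2 * (Num.max x (p^+2))^-1.
have mk : measurable_fun setT k.
  have -> : k = (fun x => 2 * p^+2 * (Num.max x (p^+2)) `^ (-1)).
    by apply/funext => x; rewrite /k powR_inv1 // le_max sqr_ge0 orbT.
  apply: measurable_funM => //.
  apply: (measurableT_comp (measurable_powR _)).
  exact: measurable_maxr.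
have kl (x : R) : 0 <= x -> x < p^+2 -> k x = 2.
  move=> x0 xp; have p2 : p^+2 != 0 by rewrite gt_eqF // (le_lt_trans x0 xp).
  by rewrite /k max_r ?ltW // mulfK.
have kr (x : R) : 0 <= x -> p^+2 <= x -> x * k x = 2 * p^+2.
  move=> x0 xp; rewrite /k max_l //.
  have [xe|xn0] := eqVneq x 0.
    rewrite xe in xp *.
    have -> : p^+2 = 0 by apply/eqP; rewrite eq_le xp sqr_ge0.
    by rewrite !(mulr0, mul0r).
  by rewrite mulrC divfK.
have kc (x : R) : 0 <= x -> (x < p^+2 /\ k x = 2 \/ p^+2 <= x /\ x * k x = 2 * p^+2).
  move=> x0; have [xp|xp] := ltP x (p^+2).
  - by left; split => //; exact: kl.
  - by right; split => //; exact: kr.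
have k0 (x : R) : 0 <= k x.
  by rewrite /k !mulr_ge0 // ?sqr_ge0 // invr_ge0 le_max sqr_ge0 orbT.
have k2 (x : R) : 0 <= x -> k x <= 2.
  move=> x0; case: (kc x x0) => [[_ ->]//|[xp xk]].
  have [xe|xn0] := eqVneq x 0.
    rewrite xe in xp xk *.
    have p20 : p^+2 = 0 by apply/eqP; rewrite eq_le xp sqr_ge0.
    by rewrite /k p20 !(mulr0, mul0r).
  have xpos : 0 < x by rewrite lt_def xn0 x0.
  rewrite -(ler_pM2l xpos) xk; nra.
have X0 t : 0 <= X t by have /andP[] := hX01 t.
have X1 t : X t <= 1 by have /andP[] := hX01 t.
have Y0 t : 0 <= Y t by have /andP[] := hY01 t.
have Y1 t : Y t <= 1 by have /andP[] := hY01 t.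
have mIA : measurable_fun setT (\1_A : T -> R) by exact: measurable_indic.
have IA (t : T) : (\1_A t : R) = 0 \/ (\1_A t : R) = 1.
  by rewrite !indicE; case: (t \in A); [right|left].
have IA0 (t : T) : 0 <= (\1_A t : R) by case: (IA t) => ->.
have IA1 (t : T) : (\1_A t : R) <= 1 by case: (IA t) => ->.
have mkX : measurable_fun setT (fun t => k (X t)) by exact: measurableT_comp mk mX.
have mkY : measurable_fun setT (fun t => k (Y t)) by exact: measurableT_comp mk mY.
have kX0 t := k0 (X t).
have kY0 t := k0 (Y t).
have kX2 t := k2 (X t) (X0 t).
have kY2 t := k2 (Y t) (Y0 t).
have iX : P.-integrable setT (EFin \o X).
  apply: (@bint _ _ _ P X 1 mX) => t; rewrite ger0_norm //.
have iY : P.-integrable setT (EFin \o Y).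
  apply: (@bint _ _ _ P Y 1 mY) => t; rewrite ger0_norm //.
have iA2 : P.-integrable setT (EFin \o (fun t => 2 * p * \1_A t)).
  apply: (@bint _ _ _ P _ (2 * p)).
    exact: measurable_funM.
  move=> t; rewrite normrM ger0_norm ?mulr_ge0 // ger0_norm //.
  by rewrite ler_piMr ?mulr_ge0.
have iAk (Z : T -> R) : measurable_fun setT (fun t => k (Z t)) ->
    (forall t, 0 <= k (Z t) <= 2) ->
    P.-integrable setT (EFin \o (fun t => \1_A t * k (Z t))).
  move=> mZ hZ; apply: (@bint _ _ _ P _ 2).
    exact: measurable_funM.
  move=> t; have /andP[a b] := hZ t.
  have := IA1 t; have := IA0 t; rewrite normrM (ger0_norm (IA0 t)) (ger0_norm a); nra.
have iZk (Z : T -> R) : measurable_fun setT Z -> measurable_fun setT (fun t => k (Z t)) ->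
    (forall t, 0 <= Z t <= 1) -> (forall t, 0 <= k (Z t) <= 2) ->
    P.-integrable setT (EFin \o (fun t => Z t * k (Z t))).
  move=> mZ mkZ hZ hkZ; apply: (@bint _ _ _ P _ 2).
    exact: measurable_funM.
  move=> t; have /andP[a b] := hZ t; have /andP[c e] := hkZ t.
  rewrite normrM !ger0_norm //; nra.
have iA1 : P.-integrable setT (EFin \o (\1_A : T -> R)).
  apply: (@bint _ _ _ P _ 1 mIA) => t; rewrite ger0_norm //.
pose fX := fun t => X t - 2 * p * \1_A t.
pose fY := fun t => Y t - 2 * p * \1_A t.
pose gX := fun t => (\1_A t - X t) * k (X t).
pose gY := fun t => (\1_A t - Y t) * k (Y t).
have ifX : P.-integrable setT (EFin \o fX).
  apply: (@bint _ _ _ P _ (1 + 2 * p)).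
    by apply: measurable_funB => //; exact: measurable_funM.
  move=> t; have := IA0 t; have := IA1 t; have := X0 t; have := X1 t.
  rewrite ler_norml /fX; nra.
have ifY : P.-integrable setT (EFin \o fY).
  apply: (@bint _ _ _ P _ (1 + 2 * p)).
    by apply: measurable_funB => //; exact: measurable_funM.
  move=> t; have := IA0 t; have := IA1 t; have := Y0 t; have := Y1 t.
  rewrite ler_norml /fY; nra.
have igX : P.-integrable setT (EFin \o gX).
  apply: (@bint _ _ _ P _ 2).
    by apply: measurable_funM => //; exact: measurable_funB.
  move=> t; have := IA0 t; have := IA1 t; have := X0 t; have := X1 t.
  have := kX0 t; have := kX2 t.
  rewrite ler_norml /gX; nra.
have igY : P.-integrable setT (EFin \o gY).
  apply: (@bint _ _ _ P _ 2).
    by apply: measurable_funM => //; exact: measurable_funB.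
  move=> t; have := IA0 t; have := IA1 t; have := Y0 t; have := Y1 t.
  have := kY0 t; have := kY2 t.
  rewrite ler_norml /gY; nra.
have ic : P.-integrable setT (EFin \o (fun _ : T => 2 * p^+2)).
  apply: (@bint _ _ _ P _ (2 * p^+2)) => // t.
  by rewrite ger0_norm // mulr_ge0 // sqr_ge0.
have IA2 : (\int[P]_t (2 * p * \1_A t)%:E = (2 * p * p)%:E)%E.
  rewrite (@intZ _ _ _ P (2 * p) (\1_A) iA1) integral_indic // setIT.
  transitivity ((2 * p)%:E * p%:E)%E; last by rewrite -EFinM.
  by congr (_ * _)%E; exact: PA.
have IfX : (\int[P]_t (fX t)%:E = (p - 2 * p * p)%:E)%E.
  rewrite (eq_integral (fun t => ((X t)%:E - (2 * p * \1_A t)%:E)%E)); last first.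
    by move=> t _; rewrite /fX EFinB.
  by rewrite integralB_EFin // EX IA2 -EFinB.
have IfY : (\int[P]_t (fY t)%:E = (p - 2 * p * p)%:E)%E.
  rewrite (eq_integral (fun t => ((Y t)%:E - (2 * p * \1_A t)%:E)%E)); last first.
    by move=> t _; rewrite /fY EFinB.
  by rewrite integralB_EFin // EY IA2 -EFinB.
have k02 (Z : T -> R) : (forall t, 0 <= Z t) -> forall t, 0 <= k (Z t) <= 2.
  by move=> hZ t; rewrite k0 k2.
have IgX : (\int[P]_t (gX t)%:E = 0)%E.
  rewrite (eq_integral (fun t => ((\1_A t * k (X t))%:E - (X t * k (X t))%:E)%E)); last first.
    by move=> t _; rewrite /gX mulrBl EFinB.
  have i1 := iAk X mkX (k02 X X0).
  have i2 := iZk X mX mkX hX01 (k02 X X0).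
  rewrite integralB_EFin //.
  have -> : (\int[P]_t (\1_A t * k (X t))%:E = \int[P]_(t in A) (k (X t))%:E)%E.
    rewrite [RHS]integral_mkcond; apply: eq_integral => t _.
    by rewrite epatch_indic /= -EFinM mulrC.
  rewrite (@cond_int _ _ _ P A X mA mX hX X0 k mk k0) subee //.
  exact: integrable_fin_num.
have IgY : (\int[P]_t (gY t)%:E = 0)%E.
  rewrite (eq_integral (fun t => ((\1_A t * k (Y t))%:E - (Y t * k (Y t))%:E)%E)); last first.
    by move=> t _; rewrite /gY mulrBl EFinB.
  have i1 := iAk Y mkY (k02 Y Y0).
  have i2 := iZk Y mY mkY hY01 (k02 Y Y0).
  rewrite integralB_EFin //.
  have -> : (\int[P]_t (\1_A t * k (Y t))%:E = \int[P]_(t in A) (k (Y t))%:E)%E.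
    rewrite [RHS]integral_mkcond; apply: eq_integral => t _.
    by rewrite epatch_indic /= -EFinM mulrC.
  rewrite (@cond_int _ _ _ P A Y mA mY hY Y0 k mk k0) subee //.
  exact: integrable_fin_num.
have IG : (\int[P]_t (2 * p^+2 + fX t + fY t + gX t + gY t)%:E =
    (2 * p * (1 - p))%:E)%E.
  rewrite (@intD5 _ _ _ P _ _ _ _ _ ic ifX ifY igX igY) IfX IfY IgX IgY intcst !adde0 -!EFinD.
  by congr (_%:E); rewrite expr2; ring.
have part1 : (\int[P]_t (`|X t - Y t|)%:E <= (2 * p * (1 - p))%:E)%E.
  rewrite -IG; apply: (le_integral measurableT).
  - apply: (@bint _ _ _ P _ 1).
      by apply: measurableT_comp; [exact: normr_measurable | exact: measurable_funB].
    move=> t; rewrite normr_id ler_norml; have := X0 t; have := X1 t.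
    have := Y0 t; have := Y1 t; lra.
  - exact: intDi (intDi (intDi (intDi ic ifX) ifY) igX) igY.
  - move=> t _; rewrite lee_fin.
    exact: (@ptwise _ p (X t) (Y t) (\1_A t) (k (X t)) (k (Y t)) (hX01 t) (hY01 t)
      (IA t) (kX0 t) (kY0 t) (kc _ (X0 t)) (kc _ (Y0 t))).
split => //.
move=> hXp hY1 hY0.
apply/eqP; rewrite eq_le part1 /=.
have mE (c : R) : measurable (Y @^-1` [set c]).
  by rewrite -(setTI (Y @^-1` _)); apply: mY => //; exact: measurable_set1.
have ind (c : R) (t : T) : (\1_(Y @^-1` [set c]) t : R) = (Y t == c)%:R.
  rewrite indicE; have [h|h] := eqVneq (Y t) c.
  - by rewrite mem_set.
  - by rewrite memNset //; apply/eqP.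
have -> : (\int[P]_t (`|X t - Y t|)%:E = \int[P]_t (`|p - Y t|)%:E)%E.
  apply: ae_eq_integral => //.
  - apply/measurable_EFinP; apply: measurableT_comp; first exact: normr_measurable.
    exact: measurable_funB.
  - apply/measurable_EFinP; apply: measurableT_comp; first exact: normr_measurable.
    exact: measurable_funB.
  - by apply: filterS hXp => t ht _ /=; rewrite ht.
have iE (c : R) : P.-integrable setT (EFin \o (\1_(Y @^-1` [set c]) : T -> R)).
  apply: (@bint _ _ _ P _ 1); first exact: measurable_indic.
  by move=> t; rewrite ind; case: (_ == _); rewrite ?normr1 ?normr0.
have iE' (a c : R) : P.-integrable setT (EFin \o (fun t => a * \1_(Y @^-1` [set c]) t)).
  apply: (@bint _ _ _ P _ `|a|); first by apply: measurable_funM => //; exact: measurable_indic.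
  by move=> t; rewrite normrM ind; case: (_ == _); rewrite ?normr1 ?normr0 ?mulr1 ?mulr0.
have I1 : (\int[P]_t ((1 - p) * \1_(Y @^-1` [set 1]) t)%:E = ((1 - p) * p)%:E)%E.
  rewrite (@intZ _ _ _ P (1 - p) _ (iE 1)) integral_indic // setIT.
  transitivity ((1 - p)%:E * p%:E)%E; last by rewrite -EFinM.
  by congr (_ * _)%E; exact: hY1.
have I0 : (\int[P]_t (p * \1_(Y @^-1` [set 0]) t)%:E = (p * (1 - p))%:E)%E.
  rewrite (@intZ _ _ _ P p _ (iE 0)) integral_indic // setIT.
  transitivity (p%:E * (1 - p)%:E)%E; last by rewrite -EFinM.
  by congr (_ * _)%E; exact: hY0.
apply: (@le_trans _ _ (\int[P]_t ((1 - p) * \1_(Y @^-1` [set 1]) t +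
    p * \1_(Y @^-1` [set 0]) t)%:E)%E).
  rewrite (intD (iE' (1 - p) 1) (iE' p 0)) I1 I0 -EFinD lee_fin.
  by rewrite le_eqVlt; apply/orP; left; apply/eqP; ring.
apply: (le_integral measurableT).
- exact: intDi (iE' (1 - p) 1) (iE' p 0).
- apply: (@bint _ _ _ P _ 1).
    by apply: measurableT_comp; [exact: normr_measurable | exact: measurable_funB].
  move=> t; rewrite normr_id ler_norml; have := Y0 t; have := Y1 t; lra.
- move=> t _; rewrite lee_fin !ind.
  have [->|n1] := eqVneq (Y t) 1.
    rewrite oner_eq0 /= distrC ger0_norm ?subr_ge0 //; lra.
  have [->|n0] := eqVneq (Y t) 0.
    rewrite ?(eq_sym 0 1) ?oner_eq0 ?eqxx /= subr0 ger0_norm //; lra.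
  rewrite ?(negbTE n1) ?(negbTE n0) /=; have := normr_ge0 (p - Y t); lra.
Qed.
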